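(* Let $n\geq5$ be a prime. For $i,j\in[n]$ (not necessarily distinct) write $\langle v_i,v_j\rangle^{\downarrow}=(v_{\max\{i,j\}},v_{\min\{i,j\}})$ and $\langle v_i,v_j\rangle^{\uparrow}=(v_{\min\{i,j\}},v_{\max\{i,j\}})$, and let $\langle a\rangle_n=a \bmod n$. For $h\in[n-2]$ and $m\in[n]$ define the edge sets $$S^{\downarrow}_h=\{\langle v_h,v_\ell\rangle^{\downarrow}\mid \ell\in[n-1]\},\qquad S^{\uparrow}_h=\{\langle v_h,v_\ell\rangle^{\uparrow}\mid \ell\in[n]\setminus\{n-2\}\},$$ $$D^{\downarrow}_m=\{\langle v_k,v_\ell\rangle^{\downarrow}\mid k,\ell\in[n]\setminus\{n-2\},\ \langle k+\ell\rangle_n=m\}\cup\{(v_{n-1},v_{n-2})\},$$ $$D^{\uparrow}_m=\{\langle v_k,v_\ell\rangle^{\uparrow}\mid k,\ell\in[n-1],\ \langle k+\ell\rangle_n=m\}\cup\{(v_{n-2},v_{n-1})\}.$$ Let $\mathcal{C}_{{\cal G}_4}$ be the set of all binary graphs $G=(V_n,L)$ such that, over $\mathbb{F}_2$, (a) $\sum_{e\in S^{\downarrow}_h}L(e)=0$ for all $h\in[n-2]$; (b) $\sum_{e\in D^{\downarrow}_m}L(e)=0$ for all $m\in[n]$; (c) $\sum_{e\in S^{\uparrow}_h}L(e)=0$ for all $h\in[n-2]$; (d) $\sum_{e\in D^{\uparrow}_m}L(e)=0$ for all $m\in[n]$. Then $\mathcal{C}_{{\cal G}_4}$ is an optimal binary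 double-node-erasure-correcting code, i.e., it corrects the failure of any two nodes and its redundancy equals $n^2-(n-2)^2=4n-4$.
   Context: $[n]=\{0,\ldots,n-1\}$, $V_n=\{v_0,\ldots,v_{n-1}\}$. A binary graph $G=(V_n,L)$ is a complete directed graph with self loops (edge set $V_n\times V_n$) with labeling $L:V_n\times V_n\to\{0,1\}$. A code over graphs is a set of such graphs; its dimension $k_{\cal G}$ is $\log_2$ of its size and its redundancy is $n^2-k_{\cal G}$. A failure of node $i$ is the erasure of the labels of all edges $(v_i,v_j)$ and $(v_j,v_i)$, $j\in[n]$, with the failed node known. A code is $\rho$-node-erasure-correcting if for every graph in it and every set of $\rho$ failed nodes the erased labels are uniquely determined; any such code has redundancy at least $n^2-(n-\rho)^2$, and it is called optimal if it attains this bound with equality. Double-node-erasure-correcting means $\rho=2$. *)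

(* Defs.v *)
From mathcomp Require Import all_boot.
Set Implicit Arguments. Unset Strict Implicit. Unset Printing Implicit Defensive.

(* Binary graph on V_n = 'I_n: a labeling of all ordered pairs (edges with self loops). *)
Definition labeling (n : nat) := {ffun 'I_n * 'I_n -> bool}.

Definition is_edge n (e : 'I_n * 'I_n) (i j : nat) : bool :=
  (val e.1 == i) && (val e.2 == j).

Definition is_down n (e : 'I_n * 'I_n) (i j : nat) := is_edge e (maxn i j) (minn i j).
Definition is_up n (e : 'I_n * 'I_n) (i j : nat) := is_edge e (minn i j) (maxn i j).

Definition S_down n (h : nat) : {set 'I_n * 'I_n} :=
  [set e | [exists l : 'I_n, (l < n - 1) && is_down e h l]].
Definition S_up n (h : nat) : {set 'I_n * 'I_n} :=
  [set e | [exists l : 'I_n, (val l != n - 2) && is_up e h l]].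
Definition D_down n (m : nat) : {set 'I_n * 'I_n} :=
  [set e | [exists k : 'I_n, exists l : 'I_n,
     [&& val k != n - 2, val l != n - 2, (k + l) %% n == m & is_down e k l]]]
  :|: [set e | is_edge e (n - 1) (n - 2)].
Definition D_up n (m : nat) : {set 'I_n * 'I_n} :=
  [set e | [exists k : 'I_n, exists l : 'I_n,
     [&& k < n - 1, l < n - 1, (k + l) %% n == m & is_up e k l]]]
  :|: [set e | is_edge e (n - 2) (n - 1)].

Definition parity n (L : labeling n) (S : {set 'I_n * 'I_n}) : bool :=
  \big[addb/false]_(e in S) L e.

Definition code_G4 (n : nat) : {set labeling n} :=
  [set L : labeling n |
    [&& [forall h : 'I_n, (h < n - 2) ==> ~~ parity L (S_down n h)],
        [forall m : 'I_n, ~~ parity L (D_down n m)],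
        [forall h : 'I_n, (h < n - 2) ==> ~~ parity L (S_up n h)] &
        [forall m : 'I_n, ~~ parity L (D_up n m)]]].

(* rho-node-erasure-correcting: for every graph in the code and every set F of
   rho failed nodes, the labels of all edges touching F are determined by the
   remaining labels, i.e. two codewords agreeing outside F coincide. *)
Definition node_erasure_correcting n (C : {set labeling n}) (rho : nat) : Prop :=
  forall (L1 L2 : labeling n) (F : {set 'I_n}),
    L1 \in C -> L2 \in C -> #|F| = rho ->
    (forall e : 'I_n * 'I_n, e.1 \notin F -> e.2 \notin F -> L1 e = L2 e) ->
    L1 = L2.

(* redundancy r = n^2 - log2 |C| ; stated as |C| = 2^(n^2 - r) *)
Definition has_redundancy n (C : {set labeling n}) (r : nat) : Prop :=
  #|C| = 2 ^ (n ^ 2 - r).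

Definition optimal_node_erasure_code n (C : {set labeling n}) (rho : nat) : Prop :=
  node_erasure_correcting C rho /\ has_redundancy C (n ^ 2 - (n - rho) ^ 2).

(* Main.v *)
Require Import Defs.
From mathcomp Require Import all_boot zify.
Set Implicit Arguments. Unset Strict Implicit. Unset Printing Implicit Defensive.


Lemma big_few (T : finType) (P : pred T) (F : T -> bool) (s : seq T) :
  uniq s -> (forall x, P x -> F x -> x \in s) ->
  \big[addb/false]_(x | P x) F x = \big[addb/false]_(x <- s) (P x && F x).
Proof.
move=> us hs.
rewrite big_uniq // (bigID (mem s)) /=.
rewrite [X in addb _ X]big1 ?addbF; last first.
  move=> x /andP[Px nx]; apply/negbTE/negP => Fx.
  by move: (hs x Px Fx); rewrite (negbTE nx).
rewrite [RHS]big_mkcond /= [LHS]big_mkcond /=.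
apply: eq_bigr => x _.
by case: (P x); case: (x \in s).
Qed.

Lemma mod2n (n x : nat) : x < n + n -> x %% n = if x < n then x else x - n.
Proof.
move=> h; case: ifP => hx; first by rewrite modn_small.
have -> : x = (x - n) + n by rewrite subnK // leqNgt hx.
by rewrite modnDr modn_small ?addnK //; lia.
Qed.

Lemma modeq2 (n x y : nat) : x < n + n -> y < n + n ->
  (x %% n == y %% n) = [|| x == y, x == y + n | y == x + n].
Proof.
move=> hx hy; rewrite (mod2n hx) (mod2n hy).
case: ifP => ?; case: ifP => ?; apply/eqP/idP; try lia.
all: move=> H; case/or3P: H => /eqP; lia.
Qed.


Definition symw (w : nat -> nat -> bool) := forall k l, w k l = w l k.
Definition suppw n (w : nat -> nat -> bool) (i j : nat) :=
  forall k l, k < n -> l < n -> w k l -> [|| k == i, k == j, l == i | l == j].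
Definition HSw n (a : nat) (w : nat -> nat -> bool) := forall h : 'I_n, h < n - 2 ->
  \big[addb/false]_(l : 'I_n | nat_of_ord l != a) w h l = false.
Definition Dpred n (b : nat) (m : nat) (kl : 'I_n * 'I_n) :=
  [&& kl.1 <= kl.2, nat_of_ord kl.1 != b, nat_of_ord kl.2 != b & (kl.1 + kl.2) %% n == m].
Definition HDw n (a b : nat) (w : nat -> nat -> bool) := forall m : 'I_n,
  \big[addb/false]_(kl | @Dpred n b m kl) w kl.1 kl.2 (+) w a b = false.

Lemma G1 n (a : nat) w i j (h : 'I_n) : suppw n w i j -> i < n -> j < n -> i != j ->
  nat_of_ord h != i -> nat_of_ord h != j ->
  \big[addb/false]_(l : 'I_n | nat_of_ord l != a) w h l = ((i != a) && w h i) (+) ((j != a) && w h j).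
Proof.
move=> sw hi hj nij nhi nhj.
rewrite (@big_few _ _ _ [:: Ordinal hi; Ordinal hj]) ?big_cons ?big_nil /= ?addbF //.
  by rewrite inE -val_eqE /= andbT.
move=> l la wl; rewrite !inE -!val_eqE /=.
have := sw h l (ltn_ord h) (ltn_ord l) wl; lia.
Qed.

Lemma wminmax w x y : symw w -> w (minn x y) (maxn x y) = w x y.
Proof.
move=> sy; case: (leqP x y) => h //; by rewrite sy.
Qed.

Lemma G2 n (b : nat) w i j l1 l2 : 0 < n -> symw w -> suppw n w i j ->
  i < n -> j < n -> l1 < n -> l2 < n -> i != j -> l1 != j ->
  [|| i + l1 == j + l2, i + l1 == j + l2 + n | j + l2 == i + l1 + n] ->
  \big[addb/false]_(kl | @Dpred n b ((i + l1) %% n) kl) w kl.1 kl.2 =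
    ([&& i != b, l1 != b & w i l1]) (+) ([&& j != b, l2 != b & w j l2]).
Proof.
move=> n0 sy sw hi hj hl1 hl2 nij nl1j hc.
have hm1 : minn i l1 < n by lia.
have hM1 : maxn i l1 < n by lia.
have hm2 : minn j l2 < n by lia.
have hM2 : maxn j l2 < n by lia.
have e2c : (j + l2) %% n == (i + l1) %% n by rewrite modeq2; lia.
rewrite (@big_few _ _ _ [:: (Ordinal hm1, Ordinal hM1); (Ordinal hm2, Ordinal hM2)]).
- rewrite !big_cons big_nil addbF /= /Dpred /= (@wminmax w) // (@wminmax w) //.
  rewrite !addn_min_max eqxx e2c geq_min leq_maxl leq_maxr !orbT !andbT.
  congr addb.
    case: (w i l1); rewrite ?andbF //; apply/idP/idP; lia.
  case: (w j l2); rewrite ?andbF //; apply/idP/idP; lia.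
- by rewrite /= inE andbT xpair_eqE -!val_eqE /=; lia.
- case=> k l /andP[/= kl /and3P[/= kb lb hm]] /= wkl.
  have hk := ltn_ord k; have hl := ltn_ord l.
  have := sw k l hk hl wkl.
  move: hm; rewrite modeq2; last 2 first.
    by clear -hk hl; lia.
    by clear -hi hl1; lia.
  rewrite !inE !xpair_eqE -!val_eqE /=.
  clear e2c hm1 hM1 hm2 hM2 sw wkl kb lb.
  move=> hm /or4P[] /eqP ek.
  + have el : l = l1 :> nat by clear -hm hk hl hl1 ek; lia.
    have -> : minn i l1 = i by clear -kl ek el; lia.
    have -> : maxn i l1 = l1 by clear -kl ek el; lia.
    by rewrite ek el !eqxx.
  + have el : l = l2 :> nat by clear -hm hk hl hl1 hl2 ek hc; lia.
    have -> : minn j l2 = j by clear -kl ek el; lia.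
    have -> : maxn j l2 = l2 by clear -kl ek el; lia.
    by rewrite ek el !eqxx orbT.
  + have el : k = l1 :> nat by clear -hm hk hl hl1 ek; lia.
    have -> : minn i l1 = l1 by clear -kl ek el; lia.
    have -> : maxn i l1 = i by clear -kl ek el; lia.
    by rewrite ek el !eqxx.
  + have el : k = l2 :> nat by clear -hm hk hl hl1 hl2 ek hc; lia.
    have -> : minn j l2 = l2 by clear -kl ek el; lia.
    have -> : maxn j l2 = j by clear -kl ek el; lia.
    by rewrite ek el !eqxx orbT.
Qed.

Lemma G2d n (b : nat) w i j : 0 < n -> symw w -> suppw n w i j ->
  i < n -> j < n -> i != j ->
  \big[addb/false]_(kl | @Dpred n b ((i + j) %% n) kl) w kl.1 kl.2 =
    [&& i != b, j != b & w i j].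
Proof.
move=> n0 sy sw hi hj nij.
have hm1 : minn i j < n by lia.
have hM1 : maxn i j < n by lia.
rewrite (@big_few _ _ _ [:: (Ordinal hm1, Ordinal hM1)]) //.
- rewrite !big_cons big_nil addbF /= /Dpred /= (@wminmax w) //.
  rewrite !addn_min_max eqxx geq_min leq_maxl leq_maxr !orbT !andbT.
  case: (w i j); rewrite ?andbF //; apply/idP/idP; lia.
- case=> k l /andP[/= kl /and3P[/= kb lb hm]] /= wkl.
  have hk := ltn_ord k; have hl := ltn_ord l.
  have := sw k l hk hl wkl.
  move: hm; rewrite modeq2; last 2 first.
    by clear -hk hl; lia.
    by clear -hi hj; lia.
  rewrite !inE !xpair_eqE -!val_eqE /=.
  clear hm1 hM1 sw wkl kb lb.
  move=> hm /or4P[] /eqP ek.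
  + have el : l = j :> nat by clear -hm hk hl hj ek; lia.
    have -> : minn i j = i by clear -kl ek el; lia.
    have -> : maxn i j = j by clear -kl ek el; lia.
    by rewrite ek el !eqxx.
  + have el : l = i :> nat by clear -hm hk hl hi ek; lia.
    have -> : minn i j = j by clear -kl ek el; lia.
    have -> : maxn i j = i by clear -kl ek el; lia.
    by rewrite ek el !eqxx.
  + have el : k = j :> nat by clear -hm hk hl hj ek; lia.
    have -> : minn i j = j by clear -kl ek el; lia.
    have -> : maxn i j = i by clear -kl ek el; lia.
    by rewrite ek el !eqxx.
  + have el : k = i :> nat by clear -hm hk hl hi ek; lia.
    have -> : minn i j = i by clear -kl ek el; lia.
    have -> : maxn i j = j by clear -kl ek el; lia.
    by rewrite ek el !eqxx.
Qed.


Definition xp n b d k := (b + k * d) %% n.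

Lemma xpS n b d k : xp n b d k.+1 = (xp n b d k + d) %% n.
Proof. by rewrite /xp modnDml mulSn; congr (_ %% n); lia. Qed.

Lemma xp_lt n b d k : 0 < n -> xp n b d k < n.
Proof. by move=> n0; rewrite /xp ltn_pmod. Qed.

Lemma xp_shift n b d k t : xp n b d (k + t) = xp n (xp n b d t) d k.
Proof. by rewrite /xp modnDml mulnDl; congr (_ %% n); lia. Qed.

Lemma xp_n n b d : xp n b d n = b %% n.
Proof. by rewrite /xp addnC mulnC modnMDl. Qed.

Lemma xp_inj n b d k k' : prime n -> 0 < d < n -> k < n -> k' < n ->
  xp n b d k = xp n b d k' -> k = k'.
Proof.
move=> pn hd.
wlog le : k k' / k <= k'.
  move=> H hk hk' e; case: (leqP k k') => h; first exact: H.
  by apply/esym; apply: (H k' k (ltnW h) hk' hk (esym e)).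
move=> hk hk' e.
have [t et] : exists t, k' = k + t by exists (k' - k); lia.
subst k'.
move: e; rewrite /xp mulnDl addnA -{1}[b + k * d]addn0 => /eqP.
rewrite eqn_modDl mod0n eq_sym -/(dvdn n (t * d)) Euclid_dvdM //.
case/orP => /dvdnP[c hc].
  case: c hc => [|c] hc; first by lia.
  lia.
case: c hc => [|c] hc; lia.
Qed.

Lemma xp_surj n b d v : prime n -> 0 < d < n -> v < n ->
  exists k, k < n /\ xp n b d k = v.
Proof.
move=> pn hd hv.
have n0 : 0 < n by exact: prime_gt0.
pose f (k : 'I_n) : 'I_n := Ordinal (xp_lt b d k n0).
have finj : injective f.
  move=> k k' /(congr1 val) /= e; apply: val_inj => /=.
  exact: (xp_inj pn hd (ltn_ord k) (ltn_ord k') e).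
have := inj_card_onto finj (leqnn _) (Ordinal hv).
case/codomP => k /(congr1 val) /= e.
by exists k; split.
Qed.


Definition abOK n (a b : nat) := (a == n - 2) && (b == n - 1) || (a == n - 1) && (b == n - 2).

Lemma uG1 n a w i j h : HSw n a w -> suppw n w i j -> i < n -> j < n -> i != j ->
  h < n - 2 -> h != i -> h != j ->
  ((i != a) && w h i) (+) ((j != a) && w h j) = false.
Proof.
move=> HS sw hi hj nij hh nhi nhj.
have hn : h < n by lia.
have := HS (Ordinal hn) hh.
by rewrite (@G1 n a w i j (Ordinal hn)).
Qed.

Lemma uS2 n a w h u v : HSw n a w -> h < n - 2 -> u < n -> v < n -> u != v ->
  (forall l, l < n -> l != u -> l != v -> l != a -> w h l = false) ->
  ((u != a) && w h u) (+) ((v != a) && w h v) = false.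
Proof.
move=> HS hh hu hv nuv H.
have hn : h < n by lia.
have := HS (Ordinal hn) hh.
rewrite (@big_few _ _ _ [:: Ordinal hu; Ordinal hv]) ?big_cons ?big_nil /= ?addbF //.
  by rewrite inE -val_eqE /= andbT.
move=> l la wl; rewrite !inE -!val_eqE /=.
rewrite -[_ || _]negbK negb_or; apply/negP => /andP[l1 l2].
by rewrite H in wl.
Qed.

Lemma uS1 n a w h u : HSw n a w -> h < n - 2 -> u < n ->
  (forall l, l < n -> l != u -> l != a -> w h l = false) ->
  (u != a) && w h u = false.
Proof.
move=> HS hh hu H.
have hn : h < n by lia.
have := HS (Ordinal hn) hh.
rewrite (@big_few _ _ _ [:: Ordinal hu]) ?big_cons ?big_nil /= ?addbF //.
move=> l la wl; rewrite !inE -!val_eqE /=.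
rewrite -[_ == _]negbK; apply/negP => l1.
by rewrite H in wl.
Qed.

Lemma uG2 n a b w i j l1 l2 : 0 < n -> symw w -> HDw n a b w -> suppw n w i j ->
  i < n -> j < n -> l1 < n -> l2 < n -> i != j -> l1 != j ->
  [|| i + l1 == j + l2, i + l1 == j + l2 + n | j + l2 == i + l1 + n] ->
  ([&& i != b, l1 != b & w i l1]) (+) ([&& j != b, l2 != b & w j l2]) (+) w a b = false.
Proof.
move=> n0 sy HD sw hi hj hl1 hl2 nij nl1j hc.
have := HD (Ordinal (ltn_pmod (i + l1) n0)).
by rewrite /= (@G2 n b w i j l1 l2).
Qed.

Lemma uG2d n a b w i j : 0 < n -> symw w -> HDw n a b w -> suppw n w i j ->
  i < n -> j < n -> i != j ->
  ([&& i != b, j != b & w i j]) (+) w a b = false.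
Proof.
move=> n0 sy HD sw hi hj nij.
have := HD (Ordinal (ltn_pmod (i + j) n0)).
by rewrite /= (@G2d n b w i j).
Qed.

Lemma ex_l2 n x y z : x < n -> y < n -> z < n ->
  exists l2, l2 < n /\ [|| x + y == z + l2, x + y == z + l2 + n | z + l2 == x + y + n].
Proof.
move=> hx hy hz.
case: (leqP z (x + y)) => h.
  case: (ltnP (x + y - z) n) => h2.
    by exists (x + y - z); split; lia.
  by exists (x + y - z - n); split; lia.
by exists (x + y + n - z); split; lia.
Qed.

Lemma suppw_sym n w i j : suppw n w i j -> suppw n w j i.
Proof. move=> sw k l hk hl wkl; have := sw k l hk hl wkl; lia. Qed.


Lemma ordy n a b l : abOK n a b -> l < n -> l != a -> l != b -> l < n - 2.
Proof. rewrite /abOK; lia. Qed.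

Lemma abOK_facts n a b : 2 < n -> abOK n a b -> [/\ a < n, b < n, a != b & n - 2 <= a].
Proof. rewrite /abOK => n2 H; split; lia. Qed.

Lemma abOK_b n a b : 2 < n -> abOK n a b -> n - 2 <= b.
Proof. rewrite /abOK; lia. Qed.

Lemma caseB n a b w o : 2 < n -> abOK n a b -> symw w -> HSw n a w -> HDw n a b w ->
  suppw n w o b -> o < n -> o != b ->
  forall k l, k < n -> l < n -> w k l -> (k == b) && (l == b).
Proof.
move=> n2 hab sy HS HD sw ho nob.
have n0 : 0 < n by lia.
have [ha hb nab han] := abOK_facts n2 hab.
have hbn := abOK_b n2 hab.
have wab : w a b = false.
  have := uG2d n0 sy HD sw ho hb nob.
  by rewrite eqxx andbF /=.
have wol : forall l, l < n -> l != b -> w o l = false.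
  move=> l hl nlb; have [l2 [hl2 hc]] := ex_l2 ho hl hb.
  have := uG2 n0 sy HD sw ho hb hl hl2 nob nlb hc.
  by rewrite eqxx /= nob nlb wab /= !addbF.
have whb : forall h, h < n - 2 -> h != o -> w b h = false.
  move=> h hh nho.
  have nhb : h != b by clear -hh hbn; lia.
  have := uG1 HS sw ho hb nob hh nho nhb.
  have hn : h < n by clear -hh; lia.
  rewrite (sy h o) (wol h hn nhb) andbF /= (sy h b).
  by rewrite eq_sym nab.
have wob : w o b = false.
  case: (ltnP o (n - 2)) => hon.
    have := uS1 HS hon hb (fun l hl nlb _ => wol l hl nlb).
    by rewrite eq_sym nab.
  have -> : o = a by move: hab; clear -hon ho nob; rewrite /abOK; lia.
  exact: wab.
have wbl : forall l, l < n -> l != b -> w b l = false.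
  move=> l hl nlb.
  case: (eqVneq l o) => [-> | nlo]; first by rewrite sy wob.
  case: (eqVneq l a) => [-> | nla]; first by rewrite sy wab.
  exact: whb (ordy hab hl nla nlb) nlo.
move=> k l hk hl wkl.
have := sw k l hk hl wkl.
case/or4P => /eqP e; rewrite e in wkl.
- case: (eqVneq l b) => [el | nlb]; first by rewrite el wob in wkl.
  by rewrite wol in wkl.
- case: (eqVneq l b) => [el | nlb]; first by rewrite e eqxx.
  by rewrite wbl in wkl.
- rewrite sy in wkl.
  case: (eqVneq k b) => [el | nlb]; first by rewrite el wob in wkl.
  by rewrite wol in wkl.
- case: (eqVneq k b) => [el | nlb]; first by rewrite e eqxx.
  by rewrite sy wbl in wkl.
Qed.

Lemma caseC n a b w o : 2 < n -> abOK n a b -> symw w -> HSw n a w -> HDw n a b w ->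
  suppw n w o a -> o < n - 2 -> w o o = false ->
  forall k l, k < n -> l < n -> w k l = false.
Proof.
move=> n2 hab sy HS HD sw hon woo.
have n0 : 0 < n by lia.
have [ha hb nab han] := abOK_facts n2 hab.
have hbn := abOK_b n2 hab.
have ho : o < n by lia.
have noa : o != a by clear -hon han; lia.
have nob : o != b by clear -hon hbn; lia.
have w1 : forall h, h < n - 2 -> h != o -> w o h = false.
  move=> h hh nho.
  have nha : h != a by clear -hh han; lia.
  have := uG1 HS sw ho ha noa hh nho nha.
  by rewrite noa eqxx /= addbF sy.
have wob : w o b = false.
  have := uS2 HS hon ho hb nob (fun l hl nlo nlb nla => w1 l (ordy hab hl nla nlb) nlo).
  by rewrite woo noa /= eq_sym nab.
have wol : forall l, l < n -> l != a -> w o l = false.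
  move=> l hl nla.
  case: (eqVneq l o) => [-> // | nlo].
  case: (eqVneq l b) => [-> // | nlb].
  exact: w1 (ordy hab hl nla nlb) nlo.
have ecd : w o a = w a b.
  have := uG2d n0 sy HD sw ho ha noa.
  rewrite nob nab /=.
  by case: (w o a); case: (w a b).
have wab : w a b = false.
  have [l1 [hl1 hc]] := ex_l2 ha hb ho.
  have nl1a : l1 != a by clear -hc ho ha hb hl1 nob; lia.
  have := uG2 n0 sy HD sw ho ha hl1 hb noa nl1a.
  have hc' : [|| o + l1 == a + b, o + l1 == a + b + n | a + b == o + l1 + n]
    by clear -hc; lia.
  move=> /(_ hc').
  by rewrite wol // eqxx /= !andbF.
have woa : w o a = false by rewrite ecd.
have way : forall y, y < n -> w a y = false.
  move=> y hy.
  case: (eqVneq y b) => [-> // | nyb].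
  case: (eqVneq y o) => [-> | nyo]; first by rewrite sy.
  have [l1 [hl1 hc]] := ex_l2 ha hy ho.
  have nl1a : l1 != a by clear -hc ho ha hy hl1 nyo; lia.
  have hc' : [|| o + l1 == a + y, o + l1 == a + y + n | a + y == o + l1 + n]
    by clear -hc; lia.
  have := uG2 n0 sy HD sw ho ha hl1 hy noa nl1a hc'.
  by rewrite (wol l1 hl1 nl1a) wab !andbF /= addbF nab nyb.
move=> k l hk hl.
apply/negbTE/negP => wkl.
have := sw k l hk hl wkl.
case/or4P => /eqP e; rewrite e in wkl.
- case: (eqVneq l a) => [el | nla]; first by rewrite el woa in wkl.
  by rewrite wol in wkl.
- by rewrite way in wkl.
- rewrite sy in wkl.
  case: (eqVneq k a) => [el | nla]; first by rewrite el woa in wkl.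
  by rewrite wol in wkl.
- by rewrite sy way in wkl.
Qed.


Lemma addb_false x y : x (+) y = false -> x = y.
Proof. by case: x; case: y. Qed.

Lemma link_cong n i j y : i < j -> j < n -> y < n ->
  [|| i + (y + (j - i)) %% n == j + y, i + (y + (j - i)) %% n == j + y + n
    | j + y == i + (y + (j - i)) %% n + n].
Proof. move=> hij hj hy; rewrite mod2n; [case: ifP => hh; lia | lia]. Qed.

Lemma back_cong n i j y : i < j -> j < n -> y < n -> (y + (j - i)) %% n = j -> y = i.
Proof. move=> hij hj hy; rewrite mod2n; [case: ifP => hh; lia | lia]. Qed.

Lemma caseA n a b w i j : prime n -> 4 < n -> abOK n a b -> symw w -> HSw n a w ->
  HDw n a b w -> suppw n w i j -> i < j -> j < n - 2 ->
  [/\ (forall ki ka, ki < n -> ka < n -> xp n b (j - i) ki = i ->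
         xp n b (j - i) ka = a -> ki < ka -> w i i = false),
      (forall ki ka, ki < n -> ka < n -> xp n b (j - i) ki = i ->
         xp n b (j - i) ka = a -> ka < ki -> w j j = false) &
      (w i i = false -> w j j = false -> forall k l, k < n -> l < n -> w k l = false)].
Proof.
move=> pn n4 hab sy HS HD sw hij hjn.
have n2 : 2 < n by lia.
have n0 : 0 < n by lia.
have [ha hb nab han] := abOK_facts n2 hab.
have hbn := abOK_b n2 hab.
have hi : i < n by lia.
have hj : j < n by lia.
have nij : i != j by lia.
have nia : i != a by clear -hij hjn han; lia.
have nja : j != a by clear -hij hjn han; lia.
have nib : i != b by clear -hij hjn hbn; lia.
have njb : j != b by clear -hij hjn hbn; lia.
have hd : 0 < j - i < n by clear -hij hj; lia.
set d := j - i.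
set x := xp n b d.
have wab : w a b = false.
  apply/negbTE/negP => wab; have := sw a b ha hb wab.
  by clear -nia nja nib njb; lia.
have E1 : w i j = false.
  have := uG2d n0 sy HD sw hi hj nij.
  by rewrite nib njb wab /= addbF.
have E2 : forall h, h < n - 2 -> h != i -> h != j -> w h i = w h j.
  move=> h hh nhi nhj.
  have := uG1 HS sw hi hj nij hh nhi nhj.
  rewrite nia nja /=; exact: addb_false.
have xlt : forall k, x k < n by move=> k; exact: xp_lt.
have x0 : x 0 = b by rewrite /x /xp mul0n addn0 modn_small.
have xinj : forall k k', k < n -> k' < n -> x k = x k' -> k = k'.
  move=> k k' hk hk'; exact: xp_inj pn hd hk hk'.
have xnb : forall k, 0 < k < n -> x k != b.
  move=> k /andP[k0 kn]; apply/eqP => e.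
  have := xinj k 0 kn n0; rewrite e x0 => /(_ erefl); lia.
have E3 : forall k, x k.+1 != j ->
    ((x k.+1 != b) && w i (x k.+1)) = ((x k != b) && w j (x k)).
  move=> k ne.
  have := uG2 n0 sy HD sw hi hj (xlt k.+1) (xlt k) nij ne.
  rewrite /x xpS -/(x k).
  move=> /(_ (link_cong hij hj (xlt k))).
  rewrite nib njb /= wab addbF.
  exact: addb_false.
have xn : x n = b by rewrite /x xp_n modn_small.
have fwd : forall K, K < n ->
    (forall k', 0 < k' < K -> x k' != a /\ (x k' = j -> w j j = false)) ->
    forall k, 0 < k <= K -> w i (x k) = false.
  move=> K hK H; elim=> [|k IH] // /andP[_ hk].
  case: k IH hk => [|k] IH hk.
    case: (eqVneq (x 1) j) => [e|ne]; first by rewrite e E1.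
    have := E3 0 ne; rewrite x0 eqxx /= (xnb 1) /=; last by clear -n2; lia.
    by [].
  have IH' : w i (x k.+1) = false by apply: IH; clear -hk; lia.
  have [ya yj] : x k.+1 != a /\ (x k.+1 = j -> w j j = false).
    by apply: H; clear -hk; lia.
  have yb : x k.+1 != b by apply: xnb; clear -hk hK; lia.
  have yn := ordy hab (xlt k.+1) ya yb.
  have wjy : w j (x k.+1) = false.
    case: (eqVneq (x k.+1) i) => [e|nyi]; first by rewrite e sy E1.
    case: (eqVneq (x k.+1) j) => [e|nyj]; first by rewrite e yj.
    by rewrite sy -E2 // sy IH'.
  case: (eqVneq (x k.+2) j) => [e|ne]; first by rewrite e E1.
  have := E3 k.+1 ne; rewrite wjy andbF (xnb k.+2) /=; last by clear -hk hK; lia.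
  by [].
have bwd : forall K, 0 < K -> K <= n - 1 ->
    (forall k', K < k' <= n - 1 -> x k' != a /\ (x k' = i -> w i i = false)) ->
    forall t k, k = n - 1 - t -> K <= k -> w j (x k) = false.
  move=> K K0 Kn H; elim=> [|t IH] k ek hk.
    have ek' : k.+1 = n by clear -ek n0; lia.
    have nn : x k.+1 != j by rewrite ek' xn eq_sym.
    have := E3 k nn; rewrite ek' xn eqxx /= (xnb k) /=; last by clear -ek' hk K0; lia.
    by move=> <-.
  have hk1 : k < n - 1 by clear -ek hk Kn K0; lia.
  have IH' : w j (x k.+1) = false by apply: (IH k.+1); clear -ek hk hk1 K0; lia.
  have [za zi] : x k.+1 != a /\ (x k.+1 = i -> w i i = false).
    by apply: H; clear -hk hk1; lia.
  have zb : x k.+1 != b by apply: xnb; clear -hk1; lia.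
  have zn := ordy hab (xlt k.+1) za zb.
  have wiz : w i (x k.+1) = false.
    case: (eqVneq (x k.+1) i) => [e|nzi]; first by rewrite e zi.
    case: (eqVneq (x k.+1) j) => [e|nzj]; first by rewrite e E1.
    by rewrite sy E2 // sy IH'.
  case: (eqVneq (x k.+1) j) => [e|ne].
    have xki : x k = i.
      apply: (back_cong hij hj (xlt k)).
      by move: e; rewrite /x xpS.
    by rewrite xki sy E1.
  have := E3 k ne; rewrite wiz andbF (xnb k) /=; last by clear -hk hk1 K0; lia.
  by move=> <-.
have posj : forall ki, ki < n -> x ki = i -> ki.+1 < n /\ x ki.+1 = j.
  move=> ki hki e.
  have xj : x ki.+1 = j.
    by rewrite /x xpS -/(x ki) e -/d /d subnKC ?modn_small // ltnW.
  split => //.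
  case: (ltngtP ki.+1 n) => // h.
    by clear -hki h; lia.
  by move: njb; rewrite -xj h xn eqxx.
have ki0 : forall ki, x ki = i -> 0 < ki.
  by move=> [|ki] //; rewrite x0 => e; move: nib; rewrite e eqxx.
have ka0 : forall ka, x ka = a -> 0 < ka.
  by move=> [|ka] //; rewrite x0 => e; move: nab; rewrite e eqxx.
split.
- move=> ki ka hki hka ei ea lt.
  rewrite -{2}ei; apply: (fwd ki hki); last by rewrite ki0 // leqnn.
  move=> k' /andP[k'0 k'k].
  have [hkj ej] := posj ki hki ei.
  split.
    apply/eqP => e; have := xinj k' ka; rewrite e ea => /(_ _ _ erefl).
    by move=> H; have := H ltac:(clear -k'k hki; lia) hka; clear -lt k'k; lia.
  move=> e; have := xinj k' ki.+1; rewrite e ej => /(_ _ _ erefl).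
  by move=> H; have := H ltac:(clear -k'k hki; lia) hkj; clear -k'k; lia.
- move=> ki ka hki hka ei ea lt.
  have [hkj ej] := posj ki hki ei.
  rewrite -{2}ej; apply: (bwd ki.+1 _ _ _ (n - 1 - ki.+1)); try by clear -hkj; lia.
  move=> k' /andP[k'0 k'k].
  have hk' : k' < n by clear -k'k n0; lia.
  split.
    apply/eqP => e; have := xinj k' ka hk' hka; rewrite e ea => /(_ erefl).
    by clear -lt k'0; lia.
  move=> e; have := xinj k' ki hk' hki; rewrite e ei => /(_ erefl).
  by clear -k'0; lia.
move=> wii wjj.
have [ka [hka ea0]] := xp_surj b pn hd ha.
have ea : x ka = a by exact: ea0.
have ka1 := ka0 ka ea.
have F := fwd ka hka.
have B := bwd ka ka1 ltac:(clear -hka; lia).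
have Fi : forall k, 0 < k <= ka -> w i (x k) = false.
  apply: F => k' /andP[k'0 k'k]; split => [|_ //].
  apply/eqP => e; have := xinj k' ka ltac:(clear -k'k hka; lia) hka.
  by rewrite e ea => /(_ erefl); clear -k'k; lia.
have Bj : forall k, ka <= k <= n - 1 -> w j (x k) = false.
  move=> k /andP[k1 k2]; apply: (B _ (n - 1 - k)) => //; last by clear -k2; lia.
  move=> k' /andP[k'0 k'k]; split => [|_ //].
  apply/eqP => e; have := xinj k' ka ltac:(clear -k'k n0; lia) hka.
  by rewrite e ea => /(_ erefl); clear -k'0; lia.
have wv : forall v, v < n -> v != b -> w i v = false /\ w j v = false.
  move=> v hv nvb.
  have [k [hk ek0]] := xp_surj b pn hd hv.
  have ek : x k = v by exact: ek0.
  have k0 : 0 < k by case: k ek {hk ek0} => [|k] //; rewrite x0 => e; move: nvb; rewrite e eqxx.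
  rewrite -ek.
  have kb : x k != b by rewrite ek.
  case: (leqP k ka) => hkka.
    have wi : w i (x k) = false by apply: Fi; rewrite k0 hkka.
    split => //.
    case: (eqVneq k ka) => [e|nkka].
      by rewrite e; apply: Bj; rewrite leqnn; clear -hka; lia.
    have xa : x k != a.
      apply/eqP => e; have := xinj k ka hk hka; rewrite e ea => /(_ erefl).
      by move/eqP; rewrite (negbTE nkka).
    have yn := ordy hab (xlt k) xa kb.
    case: (eqVneq (x k) i) => [e|nyi]; first by rewrite e sy E1.
    case: (eqVneq (x k) j) => [e|nyj]; first by rewrite e.
    by rewrite sy -E2 // sy.
  have wj : w j (x k) = false by apply: Bj; rewrite (ltnW hkka); clear -hk; lia.
  split => //.
  have xa : x k != a.
    apply/eqP => e; have := xinj k ka hk hka; rewrite e ea => /(_ erefl).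
    by clear -hkka; lia.
  have yn := ordy hab (xlt k) xa kb.
  case: (eqVneq (x k) i) => [e|nyi]; first by rewrite e.
  case: (eqVneq (x k) j) => [e|nyj]; first by rewrite e E1.
  by rewrite sy E2 // sy.
have wib : w i b = false.
  have hin : i < n - 2 by clear -hij hjn; lia.
  have := uS1 HS hin hb (fun l hl nlb _ => proj1 (wv l hl nlb)).
  by rewrite eq_sym nab.
have wjb : w j b = false.
  have := uS1 HS hjn hb (fun l hl nlb _ => proj2 (wv l hl nlb)).
  by rewrite eq_sym nab.
have wil : forall l, l < n -> w i l = false /\ w j l = false.
  move=> l hl; case: (eqVneq l b) => [->|nlb]; first by split.
  exact: wv.
move=> k l hk hl; apply/negbTE/negP => wkl.
have := sw k l hk hl wkl.
case/or4P => /eqP e; rewrite e in wkl.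
- by rewrite (proj1 (wil l hl)) in wkl.
- by rewrite (proj2 (wil l hl)) in wkl.
- by rewrite sy (proj1 (wil k hk)) in wkl.
- by rewrite sy (proj2 (wil k hk)) in wkl.
Qed.


Lemma caseA_both n wX wY i j : prime n -> 4 < n -> symw wX -> symw wY ->
  HSw n (n - 1) wX -> HDw n (n - 1) (n - 2) wX ->
  HSw n (n - 2) wY -> HDw n (n - 2) (n - 1) wY ->
  suppw n wX i j -> suppw n wY i j -> i < j -> j < n - 2 ->
  wX i i = wY i i -> wX j j = wY j j ->
  (forall k l, k < n -> l < n -> wX k l = false) /\
  (forall k l, k < n -> l < n -> wY k l = false).
Proof.
move=> pn n4 syX syY HSX HDX HSY HDY swX swY hij hjn eii ejj.
have abX : abOK n (n - 1) (n - 2) by rewrite /abOK !eqxx orbT.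
have abY : abOK n (n - 2) (n - 1) by rewrite /abOK !eqxx.
have [X1 X2 X3] := caseA pn n4 abX syX HSX HDX swX hij hjn.
have [Y1 Y2 Y3] := caseA pn n4 abY syY HSY HDY swY hij hjn.
have hd : 0 < j - i < n by clear -hij hjn; lia.
have hi : i < n by clear -hij hjn; lia.
have hq : n - 1 < n by clear -n4; lia.
have [ki [hki ei]] := xp_surj (n - 2) pn hd hi.
have [kq [hkq eq]] := xp_surj (n - 2) pn hd hq.
have pmod : (n - 2) %% n = n - 2 by rewrite modn_small //; clear -n4; lia.
have shift : forall t, xp n (n - 1) (j - i) t = xp n (n - 2) (j - i) (t + kq).
  by move=> t; rewrite xp_shift eq.
have kq0 : 0 < kq.
  case: kq eq {hkq shift} => [|kq] //.
  by rewrite /xp mul0n addn0 pmod => e; clear -e n4; lia.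
have ki0 : 0 < ki.
  case: ki ei {hki} => [|ki] //.
  by rewrite /xp mul0n addn0 pmod => e; clear -e hij hjn; lia.
have xpn : xp n (n - 2) (j - i) n = n - 2 by rewrite xp_n pmod.
have tp : xp n (n - 1) (j - i) (n - kq) = n - 2.
  by rewrite shift subnK ?xpn //; clear -hkq; lia.
case: (ltngtP ki kq) => hk.
- have wXi := X1 ki kq hki hkq ei eq hk.
  have ti : xp n (n - 1) (j - i) (n + ki - kq) = i.
    rewrite shift.
    have -> : n + ki - kq + kq = ki + n by clear -hk hkq; lia.
    by rewrite xp_shift xpn.
  have wYj : wY j j = false.
    by apply: (Y2 (n + ki - kq) (n - kq) _ _ ti tp); clear -hk hkq kq0 ki0; lia.
  have wXj : wX j j = false by rewrite ejj.
  have wYi : wY i i = false by rewrite -eii.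
  by split; [apply: X3 | apply: Y3].
- have wXj := X2 ki kq hki hkq ei eq hk.
  have ti : xp n (n - 1) (j - i) (ki - kq) = i.
    by rewrite shift subnK // ltnW.
  have wYi : wY i i = false.
    by apply: (Y1 (ki - kq) (n - kq) _ _ ti tp); clear -hk hki hkq kq0; lia.
  have wXi : wX i i = false by rewrite eii.
  have wYj : wY j j = false by rewrite -ejj.
  by split; [apply: X3 | apply: Y3].
- by move: eq; rewrite -hk ei => e; clear -e hij hjn; lia.
Qed.


Definition zX n (Z : labeling n.+1) (k l : nat) : bool :=
  Z (inord (maxn k l), inord (minn k l)).
Definition zY n (Z : labeling n.+1) (k l : nat) : bool :=
  Z (inord (minn k l), inord (maxn k l)).

Lemma pair_ord n (e : 'I_n.+1 * 'I_n.+1) x y : x < n.+1 -> y < n.+1 ->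
  (e == (inord x, inord y)) = (val e.1 == x) && (val e.2 == y).
Proof.
move=> hx hy; case: e => e1 e2.
by rewrite xpair_eqE -!val_eqE /= !inordK.
Qed.

Lemma CSd n (Z : labeling n.+1) (h : 'I_n.+1) :
  parity Z (S_down n.+1 h) =
  \big[addb/false]_(l : 'I_n.+1 | nat_of_ord l != n.+1 - 1) zX Z h l.
Proof.
pose f (l : 'I_n.+1) := (inord (maxn h l) : 'I_n.+1, inord (minn h l) : 'I_n.+1).
have hh := ltn_ord h.
have hM : forall l : 'I_n.+1, maxn h l < n.+1 by move=> l; have := ltn_ord l; clear -hh; lia.
have hm : forall l : 'I_n.+1, minn h l < n.+1 by move=> l; have := ltn_ord l; clear -hh; lia.
have -> : S_down n.+1 h = f @: [set l : 'I_n.+1 | nat_of_ord l != n.+1 - 1].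
  apply/setP => e; rewrite inE; apply/existsP/imsetP.
    case=> l /andP[hl he]; exists l; first by rewrite inE; clear -hl; lia.
    by apply/eqP; rewrite pair_ord.
  case=> l; rewrite inE => hl ->; exists l.
  rewrite /is_down /is_edge /= !inordK // !eqxx andbT.
  by have := ltn_ord l; clear -hl; lia.
rewrite /parity big_imset /=.
  by apply: eq_bigl => l; rewrite inE.
move=> l1 l2 _ _ /eqP; rewrite pair_ord // /= !inordK //.
by move=> H; apply: ord_inj; move: H; clear; lia.
Qed.

Lemma CSu n (Z : labeling n.+1) (h : 'I_n.+1) :
  parity Z (S_up n.+1 h) =
  \big[addb/false]_(l : 'I_n.+1 | nat_of_ord l != n.+1 - 2) zY Z h l.
Proof.
pose f (l : 'I_n.+1) := (inord (minn h l) : 'I_n.+1, inord (maxn h l) : 'I_n.+1).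
have hh := ltn_ord h.
have hM : forall l : 'I_n.+1, maxn h l < n.+1 by move=> l; have := ltn_ord l; clear -hh; lia.
have hm : forall l : 'I_n.+1, minn h l < n.+1 by move=> l; have := ltn_ord l; clear -hh; lia.
have -> : S_up n.+1 h = f @: [set l : 'I_n.+1 | nat_of_ord l != n.+1 - 2].
  apply/setP => e; rewrite inE; apply/existsP/imsetP.
    case=> l /andP[hl he]; exists l; first by rewrite inE.
    by apply/eqP; rewrite pair_ord.
  case=> l; rewrite inE => hl ->; exists l.
  by rewrite /is_up /is_edge /= !inordK // !eqxx hl.
rewrite /parity big_imset /=.
  by apply: eq_bigl => l; rewrite inE.
move=> l1 l2 _ _ /eqP; rewrite pair_ord // /= !inordK //.
by move=> H; apply: ord_inj; move: H; clear; lia.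
Qed.

Lemma CDd n (Z : labeling n.+1) (m : 'I_n.+1) : 2 < n.+1 ->
  parity Z (D_down n.+1 m) =
  \big[addb/false]_(kl | @Dpred n.+1 (n.+1 - 2) m kl) zX Z kl.1 kl.2
    (+) zX Z (n.+1 - 1) (n.+1 - 2).
Proof.
move=> n2.
pose g (kl : 'I_n.+1 * 'I_n.+1) :=
  (inord (maxn kl.1 kl.2) : 'I_n.+1, inord (minn kl.1 kl.2) : 'I_n.+1).
pose f0 := (inord (n.+1 - 1) : 'I_n.+1, inord (n.+1 - 2) : 'I_n.+1).
have hM : forall k l : 'I_n.+1, maxn k l < n.+1.
  by move=> k l; have := ltn_ord l; have := ltn_ord k; clear; lia.
have hm : forall k l : 'I_n.+1, minn k l < n.+1.
  by move=> k l; have := ltn_ord l; have := ltn_ord k; clear; lia.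
have h1 : n.+1 - 1 < n.+1 by clear; lia.
have h2 : n.+1 - 2 < n.+1 by clear; lia.
have -> : D_down n.+1 m = f0 |: (g @: [set kl | @Dpred n.+1 (n.+1 - 2) m kl]).
  apply/setP => e; rewrite !inE; apply/idP/idP.
    case/orP => [/existsP[k /existsP[l /and4P[hk hl hkl he]]] | he].
      apply/orP; right; apply/imsetP.
      exists (if k <= l then (k, l) else (l, k)).
        rewrite inE /Dpred; case: (leqP k l) => hlk /=.
          by rewrite hlk hk hl hkl.
        by rewrite (ltnW hlk) hk hl addnC hkl.
      apply/eqP; rewrite pair_ord //.
      by case: (leqP k l) => hlk /=; [|rewrite maxnC minnC]; exact: he.
    by apply/orP; left; rewrite pair_ord.
  case/orP => [he | /imsetP[kl hkl ->]].
    by apply/orP; right; rewrite pair_ord in he.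
  apply/orP; left; apply/existsP; exists kl.1; apply/existsP; exists kl.2.
  move: hkl; rewrite inE /Dpred => /and4P[_ -> -> ->] /=.
  by rewrite /is_down /is_edge /= !inordK // !eqxx.
rewrite /parity big_setU1 /=; last first.
  apply/imsetP => -[kl]; rewrite inE /Dpred => /and4P[_ k1 k2 _].
  move/(congr1 (fun e => nat_of_ord e.2)) => /=; rewrite !inordK //.
  by move: k1 k2; clear; lia.
rewrite big_imset /=; last first.
  move=> [k1 l1] [k2 l2]; rewrite !inE /Dpred /= => /and4P[c1 _ _ _] /and4P[c2 _ _ _].
  move=> /eqP; rewrite pair_ord // /= !inordK // => H.
  by congr pair; apply: ord_inj; move: H c1 c2; clear; lia.
rewrite addbC; congr addb.
  by apply: eq_bigl => kl; rewrite inE.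
rewrite /zX; congr (Z (inord _, inord _)); clear; lia.
Qed.

Lemma CDu n (Z : labeling n.+1) (m : 'I_n.+1) : 2 < n.+1 ->
  parity Z (D_up n.+1 m) =
  \big[addb/false]_(kl | @Dpred n.+1 (n.+1 - 1) m kl) zY Z kl.1 kl.2
    (+) zY Z (n.+1 - 2) (n.+1 - 1).
Proof.
move=> n2.
pose g (kl : 'I_n.+1 * 'I_n.+1) :=
  (inord (minn kl.1 kl.2) : 'I_n.+1, inord (maxn kl.1 kl.2) : 'I_n.+1).
pose f0 := (inord (n.+1 - 2) : 'I_n.+1, inord (n.+1 - 1) : 'I_n.+1).
have hM : forall k l : 'I_n.+1, maxn k l < n.+1.
  by move=> k l; have := ltn_ord l; have := ltn_ord k; clear; lia.
have hm : forall k l : 'I_n.+1, minn k l < n.+1.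
  by move=> k l; have := ltn_ord l; have := ltn_ord k; clear; lia.
have h1 : n.+1 - 1 < n.+1 by clear; lia.
have h2 : n.+1 - 2 < n.+1 by clear; lia.
have -> : D_up n.+1 m = f0 |: (g @: [set kl | @Dpred n.+1 (n.+1 - 1) m kl]).
  apply/setP => e; rewrite !inE; apply/idP/idP.
    case/orP => [/existsP[k /existsP[l /and4P[hk hl hkl he]]] | he].
      apply/orP; right; apply/imsetP.
      have hk' : nat_of_ord k != n.+1 - 1 by move: hk; clear; lia.
      have hl' : nat_of_ord l != n.+1 - 1 by move: hl; clear; lia.
      exists (if k <= l then (k, l) else (l, k)).
        rewrite inE /Dpred; case: (leqP k l) => hlk /=.
          by rewrite hlk hk' hl' hkl.
        by rewrite (ltnW hlk) hk' hl' addnC hkl.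
      apply/eqP; rewrite pair_ord //.
      by case: (leqP k l) => hlk /=; [|rewrite maxnC minnC]; exact: he.
    by apply/orP; left; rewrite pair_ord.
  case/orP => [he | /imsetP[[k l] hkl ->]].
    by apply/orP; right; rewrite pair_ord in he.
  apply/orP; left; apply/existsP; exists k; apply/existsP; exists l.
  move: hkl; rewrite inE /Dpred => /and4P[_ k1 k2 ->] /=.
  have k1' : k < n.+1 - 1 by move: k1 (ltn_ord k) => /= + +; clear; lia.
  have k2' : l < n.+1 - 1 by move: k2 (ltn_ord l) => /= + +; clear; lia.
  by rewrite k1' k2' /is_up /is_edge /= !inordK // !eqxx.
rewrite /parity big_setU1 /=; last first.
  apply/imsetP => -[kl]; rewrite inE /Dpred => /and4P[_ k1 k2 _].
  move/(congr1 (fun e => nat_of_ord e.2)) => /=; rewrite !inordK //.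
  by move: k1 k2; clear; lia.
rewrite big_imset /=; last first.
  move=> [k1 l1] [k2 l2]; rewrite !inE /Dpred /= => /and4P[c1 _ _ _] /and4P[c2 _ _ _].
  move=> /eqP; rewrite pair_ord // /= !inordK // => H.
  by congr pair; apply: ord_inj; move: H c1 c2; clear; lia.
rewrite addbC; congr addb.
  by apply: eq_bigl => kl; rewrite inE.
rewrite /zY; congr (Z (inord _, inord _)); clear; lia.
Qed.


Lemma zero_main n (pn : prime n.+1) (n4 : 4 < n.+1) (Z : labeling n.+1) (i j : 'I_n.+1) :
  Z \in code_G4 n.+1 -> i < j ->
  (forall e : 'I_n.+1 * 'I_n.+1, e.1 \notin [set i; j] -> e.2 \notin [set i; j] -> Z e = false) ->
  forall e, Z e = false.
Proof.
move=> ZC hij Hout.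
have n2 : 2 < n.+1 by clear -n4; lia.
move: ZC; rewrite inE => /and4P[/forallP HSd /forallP HDd /forallP HSu /forallP HDu].
have HSX : HSw n.+1 (n.+1 - 1) (zX Z).
  by move=> h hh; have := HSd h; rewrite hh /= CSd => /negbTE.
have HDX : HDw n.+1 (n.+1 - 1) (n.+1 - 2) (zX Z).
  by move=> m; have := HDd m; rewrite CDd // => /negbTE.
have HSY : HSw n.+1 (n.+1 - 2) (zY Z).
  by move=> h hh; have := HSu h; rewrite hh /= CSu => /negbTE.
have HDY : HDw n.+1 (n.+1 - 2) (n.+1 - 1) (zY Z).
  by move=> m; have := HDu m; rewrite CDu // => /negbTE.
have symX : symw (zX Z) by move=> k l; rewrite /zX maxnC minnC.
have symY : symw (zY Z) by move=> k l; rewrite /zY maxnC minnC.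
have hi := ltn_ord i.
have hj := ltn_ord j.
have notin : forall x, x < n.+1 -> x != i -> x != j -> (inord x : 'I_n.+1) \notin [set i; j].
  move=> x hx nxi nxj; rewrite !inE -!val_eqE /= inordK //.
  by move: nxi nxj; clear; lia.
have supX : suppw n.+1 (zX Z) i j.
  move=> k l hk hl; rewrite /zX => wz; apply/negPn/negP => H.
  have hM : maxn k l < n.+1 by clear -hk hl; lia.
  have hm : minn k l < n.+1 by clear -hk hl; lia.
  rewrite Hout in wz => //; apply: notin => //; move: H; clear; lia.
have supY : suppw n.+1 (zY Z) i j.
  move=> k l hk hl; rewrite /zY => wz; apply/negPn/negP => H.
  have hM : maxn k l < n.+1 by clear -hk hl; lia.
  have hm : minn k l < n.+1 by clear -hk hl; lia.
  rewrite Hout in wz => //; apply: notin => //; move: H; clear; lia.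
have diag : forall k, zX Z k k = zY Z k k by move=> k; rewrite /zX /zY maxnn minnn.
have abX : abOK n.+1 (n.+1 - 1) (n.+1 - 2) by rewrite /abOK !eqxx orbT.
have abY : abOK n.+1 (n.+1 - 2) (n.+1 - 1) by rewrite /abOK !eqxx.
have [X0 Y0] : (forall k l, k < n.+1 -> l < n.+1 -> zX Z k l = false) /\
               (forall k l, k < n.+1 -> l < n.+1 -> zY Z k l = false).
  case: (ltnP j (n.+1 - 2)) => hjp.
    exact: caseA_both pn n4 symX symY HSX HDX HSY HDY supX supY hij hjp (diag i) (diag j).
  case: (eqVneq (nat_of_ord j) (n.+1 - 2)) => ej.
    rewrite ej in supX supY.
    have nib : nat_of_ord i != n.+1 - 2 by clear -hij ej; lia.
    have XB := caseB n2 abX symX HSX HDX supX hi nib.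
    have hip : i < n.+1 - 2 by clear -hij ej; lia.
    have wXii : zX Z i i = false.
      apply/negbTE/negP => H; have := XB i i hi hi H; clear -hip; lia.
    have Y0 := caseC n2 abY symY HSY HDY supY hip ltac:(by rewrite -diag).
    split => // k l hk hl; apply/negbTE/negP => H.
    have := XB k l hk hl H => /andP[/eqP ek /eqP el].
    by move: H; rewrite ek el diag Y0 //; clear; lia.
  have ejq : nat_of_ord j = n.+1 - 1 by clear -ej hjp hj; lia.
  rewrite ejq in supX supY.
  case: (ltnP i (n.+1 - 2)) => hip.
    have niq : nat_of_ord i != n.+1 - 1 by clear -hip; lia.
    have YB := caseB n2 abY symY HSY HDY supY hi niq.
    have wYii : zY Z i i = false.
      apply/negbTE/negP => H; have := YB i i hi hi H; clear -hip; lia.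
    have X0 := caseC n2 abX symX HSX HDX supX hip ltac:(by rewrite diag).
    split => // k l hk hl; apply/negbTE/negP => H.
    have := YB k l hk hl H => /andP[/eqP ek /eqP el].
    by move: H; rewrite ek el -diag X0 //; clear; lia.
  have eip : nat_of_ord i = n.+1 - 2 by clear -hip hij ejq; lia.
  rewrite eip in supX supY.
  have hq : n.+1 - 1 < n.+1 by clear; lia.
  have hp : n.+1 - 2 < n.+1 by clear; lia.
  have nqp : n.+1 - 1 != n.+1 - 2 by clear -n2; lia.
  have XB := caseB n2 abX symX HSX HDX (suppw_sym supX) hq nqp.
  have npq : n.+1 - 2 != n.+1 - 1 by clear -n2; lia.
  have YB := caseB n2 abY symY HSY HDY supY hp npq.
  split => k l hk hl; apply/negbTE/negP => H.
    have := XB k l hk hl H => /andP[/eqP ek /eqP el].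
    move: H; rewrite ek el diag => H.
    by have := YB _ _ hp hp H; clear -n2; lia.
  have := YB k l hk hl H => /andP[/eqP ek /eqP el].
  move: H; rewrite ek el -diag => H.
  by have := XB _ _ hq hq H; clear -n2; lia.
case=> e1 e2.
have h1 := ltn_ord e1; have h2 := ltn_ord e2.
case: (leqP e2 e1) => h.
  have <- : zX Z e1 e2 = Z (e1, e2).
    rewrite /zX; congr (Z (_, _)); apply: ord_inj; rewrite inordK; clear -h h1 h2; lia.
  exact: X0.
have <- : zY Z e1 e2 = Z (e1, e2).
  rewrite /zY; congr (Z (_, _)); apply: ord_inj; rewrite inordK; clear -h h1 h2; lia.
exact: Y0.
Qed.


Definition ladd n (L1 L2 : labeling n) : labeling n := [ffun e => L1 e (+) L2 e].

Lemma parity_add n (L1 L2 : labeling n) S :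
  parity (ladd L1 L2) S = parity L1 S (+) parity L2 S.
Proof.
rewrite /parity -big_split /=; apply: eq_bigr => e _; by rewrite ffunE.
Qed.

Definition synT n := (('I_(n - 2) + 'I_n) + ('I_(n - 2) + 'I_n))%type.

Definition syn n (L : labeling n) : {ffun synT n -> bool} :=
  [ffun t : synT n => match t with
   | inl (inl h) => parity L (S_down n (nat_of_ord h))
   | inl (inr m) => parity L (D_down n (nat_of_ord m))
   | inr (inl h) => parity L (S_up n (nat_of_ord h))
   | inr (inr m) => parity L (D_up n (nat_of_ord m)) end].

Lemma syn_add n (L1 L2 : labeling n) t : syn (ladd L1 L2) t = syn L1 t (+) syn L2 t.
Proof. by rewrite !ffunE; case: t => [[h|m]|[h|m]]; rewrite parity_add. Qed.

Lemma code_syn n (L : labeling n) : (L \in code_G4 n) = (syn L == [ffun => false]).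
Proof.
apply/idP/idP.
  rewrite inE => /and4P[/forallP H1 /forallP H2 /forallP H3 /forallP H4].
  apply/eqP/ffunP => t; rewrite !ffunE; case: t => [[h|m]|[h|m]].
  - have := H1 (widen_ord (leq_subr 2 n) h); rewrite /= ltn_ord /=.
    exact: negbTE.
  - exact: negbTE (H2 m).
  - have := H3 (widen_ord (leq_subr 2 n) h); rewrite /= ltn_ord /=.
    exact: negbTE.
  - exact: negbTE (H4 m).
move=> /eqP/ffunP E; rewrite inE; apply/and4P; split; apply/forallP => h.
- apply/implyP => hh.
  have := E (inl (inl (Ordinal hh)) : synT n); rewrite !ffunE /= => ->.
  by [].
- by have := E (inl (inr h) : synT n); rewrite !ffunE /= => ->.
- apply/implyP => hh.
  have := E (inr (inl (Ordinal hh)) : synT n); rewrite !ffunE /= => ->.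
  by [].
- by have := E (inr (inr h) : synT n); rewrite !ffunE /= => ->.
Qed.

Lemma code_add n (L1 L2 : labeling n) : L1 \in code_G4 n -> L2 \in code_G4 n ->
  ladd L1 L2 \in code_G4 n.
Proof.
rewrite !code_syn => /eqP E1 /eqP E2; apply/eqP/ffunP => t.
by rewrite syn_add E1 E2 !ffunE.
Qed.

Lemma ladd_eq0 n (L1 L2 : labeling n) : (forall e, ladd L1 L2 e = false) -> L1 = L2.
Proof.
move=> H; apply/ffunP => e; have := H e; rewrite ffunE.
by case: (L1 e); case: (L2 e).
Qed.

Lemma erasure n (pn : prime n.+1) (n4 : 4 < n.+1) :
  node_erasure_correcting (code_G4 n.+1) 2.
Proof.
move=> L1 L2 F C1 C2 cF H.
have /cards2P[x [y [nxy eF]]] : #|F| == 2 by rewrite cF.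
apply: ladd_eq0.
have ZC := code_add C1 C2.
have Hout : forall (u v : 'I_n.+1), F = [set u; v] -> forall e : 'I_n.+1 * 'I_n.+1,
    e.1 \notin [set u; v] -> e.2 \notin [set u; v] -> ladd L1 L2 e = false.
  move=> u v eF' e h1 h2; rewrite ffunE H; first by case: (L2 e).
    by rewrite eF'.
  by rewrite eF'.
case: (ltngtP x y) => hxy.
- by apply: (zero_main pn n4 ZC hxy); apply: (Hout x y eF).
- have eF' : F = [set y; x] by rewrite eF setUC.
  by apply: (zero_main pn n4 ZC hxy); apply: (Hout y x eF').
- by move: nxy; rewrite (ord_inj hxy) eqxx.
Qed.


Lemma suppon (T : finType) (D : {set T}) (f : {ffun T -> bool}) :
  (f \in pffun_on false D [set: bool]) = [forall e, (e \notin D) ==> ~~ f e].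
Proof.
apply/pffun_onP/forallP.
  case=> sub _ e; apply/implyP => nD; apply/negP => fe.
  have : e \in false.-support f by rewrite supportE fe.
  by move/(subsetP sub); rewrite (negbTE nD).
move=> H; split.
  apply/subsetP => e; rewrite supportE => fe; apply/negPn/negP => nD.
  by move: (implyP (H e) nD) fe; case: (f e).
by move=> y; rewrite inE.
Qed.

Lemma a1 m : (m.+2)^2 - (4 * m.+2 - 4) = m * m.
Proof. rewrite !expnS expn0 muln1. nia. Qed.
Lemma a2 m : (m.+2)^2 - ((m.+2)^2 - (m.+2 - 2)^2) = m * m.
Proof. rewrite !expnS !expn0 !muln1. nia. Qed.
Lemma a3 m : (m.+2) * (m.+2) - m * m = 4 * m.+2 - 4.
Proof. nia. Qed.

Lemma a4 N : 2 <= N -> N * N - (N - 2) * (N - 2) = (N - 2 + N) + (N - 2 + N).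
Proof. case: N => [|[|m]] // _; nia. Qed.

Lemma a5 N : 2 <= N -> (N - 2) * (N - 2) = N ^ 2 - (4 * N - 4).
Proof. case: N => [|[|m]] // _; rewrite !expnS expn0 muln1; nia. Qed.

Lemma a6 N : 2 <= N -> (N - 2) * (N - 2) = N ^ 2 - (N ^ 2 - (N - 2) ^ 2).
Proof. case: N => [|[|m]] // _; rewrite !expnS !expn0 !muln1; nia. Qed.

Lemma count_main n (pn : prime n.+1) (n4 : 4 < n.+1) :
  #|code_G4 n.+1| = 2 ^ ((n.+1 - 2) * (n.+1 - 2)).
Proof.
pose N := n.+1.
have h0N : 0 < N by [].
have h1N : 1 < N by rewrite /N; clear -n4; lia.
pose i0 : 'I_N := Ordinal h0N.
pose j0 : 'I_N := Ordinal h1N.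
have hij : i0 < j0 by [].
have nij : i0 != j0 by rewrite -val_eqE.
pose F0 := [set i0; j0].
pose E := [set e : 'I_N * 'I_N | (e.1 \in F0) || (e.2 \in F0)].
have NEe : ~: E = setX (~: F0) (~: F0).
  by apply/setP => e; rewrite !inE negb_or.
have cNE : #|~: E| = (N - 2) * (N - 2).
  rewrite NEe cardsX.
  have := cardsC F0; rewrite cards2 nij card_ord => h.
  by have -> : #|~: F0| = N - 2 by clear -h; lia.
have cE : #|E| = #|{: synT N}|.
  have := cardsC E; rewrite cNE card_prod card_ord /synT !card_sum !card_ord => h.
  have : #|E| = N * N - (N - 2) * (N - 2) by clear -h; lia.
  move=> ->; apply: a4; rewrite /N; clear -n4; lia.
pose V := [set L : labeling N | L \in pffun_on false E [set: bool]].
have cV : #|V| = 2 ^ #|E| by rewrite cardsE card_pffun_on cardsT card_bool.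
have Vz : forall L, L \in V -> forall e, e \notin E -> L e = false.
  move=> L; rewrite inE suppon => /forallP H e nE.
  by move: (implyP (H e) nE) => /negbTE.
have zE : forall Z : labeling N, Z \in code_G4 N -> (forall e, e \notin E -> Z e = false) ->
    forall e, Z e = false.
  move=> Z ZC H; apply: (zero_main pn n4 ZC hij) => e h1 h2.
  by apply: H; rewrite inE negb_or h1 h2.
have synV : {in V &, injective (@syn N)}.
  move=> L1 L2 h1 h2 es; apply: ladd_eq0; apply: zE.
    by rewrite code_syn; apply/eqP/ffunP => t; rewrite syn_add es addbb !ffunE.
  by move=> e nE; rewrite ffunE (Vz _ h1 e nE) (Vz _ h2 e nE).
have synT_all : forall s : {ffun synT N -> bool}, s \in (@syn N) @: V.
  have : (@syn N) @: V == [set: {ffun synT N -> bool}].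
    rewrite eqEcard subsetT /= cardsT card_ffun card_bool (card_in_imset synV) cV.
    by rewrite cE.
  by move/eqP => ->; move=> s; rewrite inE.
pose res (L : labeling N) : labeling N := [ffun e => (e \notin E) && L e].
pose W := [set u : labeling N | u \in pffun_on false (~: E) [set: bool]].
have cW : #|W| = 2 ^ ((N - 2) * (N - 2)).
  by rewrite cardsE card_pffun_on cardsT card_bool cNE.
have resI : {in code_G4 N &, injective res}.
  move=> L1 L2 C1 C2 er; apply: ladd_eq0; apply: zE; first exact: code_add.
  move=> e nE; move/ffunP/(_ e): er; rewrite !ffunE nE /= => ->.
  by rewrite addbb.
have resW : res @: code_G4 N = W.
  apply/setP => u; apply/imsetP/idP.
    case=> L _ ->; rewrite inE suppon; apply/forallP => e; apply/implyP.
    by rewrite inE negbK ffunE => ->.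
  rewrite inE suppon => /forallP Hu.
  have /imsetP[v hv ev] := synT_all (syn u).
  exists (ladd u v).
    by rewrite code_syn; apply/eqP/ffunP => t; rewrite syn_add ev addbb !ffunE.
  apply/ffunP => e; rewrite !ffunE.
  case: (boolP (e \in E)) => hE /=.
    by have := implyP (Hu e); rewrite inE negbK hE => /(_ isT) /negbTE.
  by rewrite (Vz _ hv e hE) addbF.
by rewrite -cW -resW (card_in_imset resI).
Qed.

Theorem theorem3 (n : nat) (hp : prime n) (h5 : 5 <= n) :
  optimal_node_erasure_code (code_G4 n) 2 /\
  has_redundancy (code_G4 n) (4 * n - 4).
Proof.
case: n hp h5 => [|n] hp h5; first by [].
have n4 : 4 < n.+1 by [].
have C := count_main hp n4.
split; [split; [exact: erasure|] |]; rewrite /has_redundancy C.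
  by rewrite -a6 //; clear -h5; lia.
by rewrite -a5 //; clear -h5; lia.
Qed.
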